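(* Let \(X\) be a nonempty set, let \(\Phi\) be a mapping with domain \(X^{2}\), and let \(a_0 \in \Phi(X^{2})\). Then \(\Phi\) is \(a_0\)-coherent if and only if the fiber \(R := \Phi^{-1}(a_0)\) is an equivalence relation on \(X\) and the partition \(P_R \otimes P_R^1\) of \(X^{2}\) is a refinement of the partition \(P_{\Phi^{-1}} := \{\Phi^{-1}(b) \colon b \in \Phi(X^{2})\}\) of \(X^2\).
   Context: \(\Phi(X^2)\) is the range of \(\Phi\) and \(\Phi^{-1}(b)=\{\langle x,y\rangle\in X^2:\Phi(x,y)=b\}\). \(\Phi\) is strongly consistent with an equivalence relation \(R\) on \(X\) if \(\langle x_1,x_2\rangle\in R\) and \(\langle x_3,x_4\rangle\in R\) imply \(\Phi(x_1,x_3)=\Phi(x_2,x_4)\); \(\Phi\) is \(a_0\)-coherent if \(\Phi^{-1}(a_0)\) is an equivalence relation on \(X\) and \(\Phi\) is strongly consistent with it. For an equivalence relation \(R\) on \(X\), \(P_R=\{X_j: j\in J\}\) is the partition of \(X\) into the (distinct) equivalence classes of \(R\), and \(P_R\otimes P_R^1\) is the partition of \(X^2\) whose blocks are the set \(\bigcup_{j\in J}X_j^2\) together with all sets \(X_{j_1}\times X_{j_2}\) for distinct \(j_1,j_2\in J\). A partition \(P_1\) of a set is a refinement of a partition \(P_2\) of the same set if every block of \(P_1\) is contained in some block of \(P_2\). *)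

(* Defs.v *)
(* sets are predicates, set equality is pointwise iff. *)
From Stdlib Require Import Relation_Definitions.

Set Implicit Arguments.

Section Defs.
Variables (X B : Type).

Definition fiber (Phi : X -> X -> B) (b : B) : relation X :=
  fun x y => Phi x y = b.

Definition in_range (Phi : X -> X -> B) (b : B) : Prop :=
  exists x y, Phi x y = b.

Definition strongly_consistent (Phi : X -> X -> B) (R : relation X) : Prop :=
  forall x1 x2 x3 x4, R x1 x2 -> R x3 x4 -> Phi x1 x3 = Phi x2 x4.

Definition coherent (Phi : X -> X -> B) (a0 : B) : Prop :=
  equivalence X (fiber Phi a0) /\ strongly_consistent Phi (fiber Phi a0).

Definition eq_class (R : relation X) (C : X -> Prop) : Prop :=
  exists x, forall y, C y <-> R x y.

Definition PR_tensor (R : relation X) (A : X * X -> Prop) : Prop :=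
  (forall p, A p <-> exists C, eq_class R C /\ C (fst p) /\ C (snd p))
  \/ (exists C1 C2, eq_class R C1 /\ eq_class R C2 /\
        ~ (forall y, C1 y <-> C2 y) /\
        forall p, A p <-> (C1 (fst p) /\ C2 (snd p))).

Definition P_fibers (Phi : X -> X -> B) (A : X * X -> Prop) : Prop :=
  exists b, in_range Phi b /\ forall p, A p <-> Phi (fst p) (snd p) = b.

Definition refines (P1 P2 : (X * X -> Prop) -> Prop) : Prop :=
  forall A, P1 A -> exists A', P2 A' /\ forall p, A p -> A' p.

End Defs.

(* Main.v *)
Require Import Defs.
From Stdlib Require Import Relation_Definitions Classical.

Theorem theorem2p10 (X B : Type) (Phi : X -> X -> B) (a0 : B) :
  inhabited X -> in_range Phi a0 ->
  (coherent Phi a0 <->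
   (equivalence X (fiber Phi a0) /\
    refines (PR_tensor (fiber Phi a0)) (P_fibers Phi))).
Proof.
  intros _ Hr. split.
  - intros [He Hs]. split; [exact He|].
    destruct He as [Hrf Htr Hsy].
    intros A [HA|[C1 [C2 [[z1 H1] [[z2 H2] [_ HA]]]]]].
    + exists (fun p => Phi (fst p) (snd p) = a0). split.
      * exists a0. split; [exact Hr| intros p; tauto].
      * intros p Hp. apply HA in Hp. destruct Hp as [C [[z Hz] [Ha Hb]]].
        apply Hz in Ha. apply Hz in Hb.
        apply (Htr _ z); [apply Hsy; exact Ha| exact Hb].
    + exists (fun p => Phi (fst p) (snd p) = Phi z1 z2). split.
      * exists (Phi z1 z2). split; [exists z1, z2; reflexivity| intros p; tauto].
      * intros p Hp. apply HA in Hp. destruct Hp as [Ha Hb].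
        apply H1 in Ha. apply H2 in Hb. symmetry. apply Hs; assumption.
  - intros [He Href]. split; [exact He|].
    pose proof He as [Hrf Htr Hsy].
    intros x1 x2 x3 x4 H12 H34.
    destruct (classic (fiber Phi a0 x1 x3)) as [H13|H13].
    + set (A := fun p : X * X => exists C, eq_class (fiber Phi a0) C /\ C (fst p) /\ C (snd p)).
      assert (HA : PR_tensor (fiber Phi a0) A) by (left; intros p; tauto).
      destruct (Href A HA) as [A' [[b [_ Hb]] Hsub]].
      assert (Ea : A (x1, x3)).
      { exists (fiber Phi a0 x1). split; [exists x1; intros; tauto|]. simpl. split; [apply Hrf|exact H13]. }
      assert (Eb : A (x2, x4)).
      { exists (fiber Phi a0 x1). split; [exists x1; intros; tauto|]. simpl. split; [exact H12|].
        apply (Htr _ x3); assumption. }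
      apply Hsub, Hb in Ea. apply Hsub, Hb in Eb. simpl in *. congruence.
    + set (A := fun p : X * X => fiber Phi a0 x1 (fst p) /\ fiber Phi a0 x3 (snd p)).
      assert (HA : PR_tensor (fiber Phi a0) A).
      { right. exists (fiber Phi a0 x1), (fiber Phi a0 x3).
        split; [exists x1; intros; tauto|]. split; [exists x3; intros; tauto|].
        split; [|intros p; unfold A; tauto].
        intros Heq. apply H13. apply Hsy. apply Heq. apply Hrf. }
      destruct (Href A HA) as [A' [[b [_ Hb]] Hsub]].
      assert (Ea : A (x1, x3)) by (split; apply Hrf).
      assert (Eb : A (x2, x4)) by (split; assumption).
      apply Hsub, Hb in Ea. apply Hsub, Hb in Eb. simpl in *. congruence.
Qed.
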